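(* Let $\eta=(\eta_{\alpha\beta})_{\alpha,\beta=1}^n$ be a constant symmetric invertible matrix with inverse $(\eta^{\alpha\beta})$, and let $F(t^1,\dots,t^n)$ satisfy the associativity equations $$\frac{\partial^3 F}{\partial t^\alpha\partial t^\beta\partial t^\lambda}\eta^{\lambda\mu}\frac{\partial^3 F}{\partial t^\gamma\partial t^\delta\partial t^\mu}=\frac{\partial^3 F}{\partial t^\gamma\partial t^\beta\partial t^\lambda}\eta^{\lambda\mu}\frac{\partial^3 F}{\partial t^\alpha\partial t^\delta\partial t^\mu}\quad\text{for all }\alpha,\beta,\gamma,\delta.$$ Define $$\widetilde F(t^0,t^1,\dots,t^n,t^{n+1})=\frac12\left(\eta_{\alpha\beta}t^\alpha t^\beta t^0+(t^0)^2t^{n+1}\right)+F(t^1,\dots,t^n)$$ and the $(n+2)\times(n+2)$ matrix (indices $0,1,\dots,n,n+1$) $$\widetilde\eta=\begin{pmatrix}0&0&1\\0&\eta&0\\1&0&0\end{pmatrix}.$$ Then $\widetilde F$ satisfies the associativity equations in the variables $t^0,\dots,t^{n+1}$ with $\eta$ replaced by $\widetilde\eta$ (and $\eta^{\lambda\mu}$ by the entries $\widetilde\eta^{kl}$ of $\widetilde\eta^{-1}$); the algebra with basis $e_0,\dots,e_{n+1}$ and multiplication $e_i\cdot e_j=c^k_{ij}e_k$, $c^k_{ij}=\widetilde\eta^{kl}\frac{\partial^3\widetilde F}{\partial t^l\partial t^i\partial t^j}$, is associative, has unity $e_0$ (i.e. $e_0\cdot e_k=e_k$ for all $k=0,\dots,n+1$),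 and $e_{n+1}^2=0$. Moreover, if $F$ is quasihomogeneous, i.e. $F(\lambda^{d_1}t^1,\dots,\lambda^{d_n}t^n)=\lambda^{d_F}F(t^1,\dots,t^n)$, and there is a constant $c$ with $d_\alpha+d_\beta=c$ for all $\alpha,\beta$ such that $\eta_{\alpha\beta}\neq0$, then $\widetilde F$ is quasihomogeneous with the same $d_F$, the same $d_1,\dots,d_n$, and $d_0=d_F-c$, $d_{n+1}=2c-d_F$.
   Context: Summation over repeated indices is understood. Quasihomogeneity of a function $G(t^0,\dots,t^{n+1})$ with exponents $d_0,\dots,d_{n+1}$ and degree $d_G$ means $G(\lambda^{d_0}t^0,\dots,\lambda^{d_{n+1}}t^{n+1})=\lambda^{d_G}G(t^0,\dots,t^{n+1})$. *)

(* Defs.v *)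
From HB Require Import structures.
From mathcomp Require Import all_boot all_order all_algebra.
From mathcomp Require Import all_classical all_reals all_analysis.
Set Implicit Arguments. Unset Strict Implicit. Unset Printing Implicit Defensive.
Import Order.TTheory GRing.Theory Num.Theory.
Import numFieldNormedType.Exports.
Local Open Scope ring_scope.

Section Defs.
Variable R : realType.

Definition pd (m : nat) (i : 'I_m) (G : 'rV[R]_m -> R) : 'rV[R]_m -> R :=
  fun x => derive G x (delta_mx 0 i).

Definition pd3 (m : nat) (a b c : 'I_m) (G : 'rV[R]_m -> R) : 'rV[R]_m -> R :=
  pd a (pd b (pd c G)).

Definition assoc_eqs (m : nat) (g : 'M[R]_m) (G : 'rV[R]_m -> R) : Prop :=
  forall (x : 'rV[R]_m) (a b c d : 'I_m),
    \sum_(l < m) \sum_(k < m) pd3 a b l G x * (invmx g) l k * pd3 c d k G x =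
    \sum_(l < m) \sum_(k < m) pd3 c b l G x * (invmx g) l k * pd3 a d k G x.

Definition quasihom (m : nat) (G : 'rV[R]_m -> R) (d : 'I_m -> R) (dG : R) : Prop :=
  forall (lam : R) (x : 'rV[R]_m), 0 < lam ->
    G (\row_i (lam `^ d i * x 0 i)) = lam `^ dG * G x.

(* indices 0, 1..n, n+1 of the extended space *)
Definition i0 (n : nat) : 'I_n.+2 := ord0.
Definition iN (n : nat) : 'I_n.+2 := ord_max.
Definition iL (n : nat) (a : 'I_n) : 'I_n.+2 := lift ord0 (widen_ord (leqnSn n) a).
Definition cls (n : nat) (k : 'I_n.+2) : option 'I_n := [pick a : 'I_n | iL a == k].

Definition proj_mid (n : nat) (t : 'rV[R]_n.+2) : 'rV[R]_n := \row_a t 0 (iL a).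

Definition Ftilde (n : nat) (eta : 'M[R]_n) (F : 'rV[R]_n -> R) (t : 'rV[R]_n.+2) : R :=
  2^-1 * (\sum_(a < n) \sum_(b < n) eta a b * t 0 (iL a) * t 0 (iL b) * t 0 (i0 n)
          + t 0 (i0 n) ^+ 2 * t 0 (iN n))
  + F (proj_mid t).

(* eta tilde = [[0,0,1],[0,eta,0],[1,0,0]] *)
Definition etatilde (n : nat) (eta : 'M[R]_n) : 'M[R]_n.+2 :=
  \matrix_(k, l)
    match cls k, cls l with
    | Some a, Some b => eta a b
    | None, None => if ((k == i0 n) && (l == iN n)) || ((k == iN n) && (l == i0 n))
                    then 1 else 0
    | _, _ => 0
    end.

Definition cstr (n : nat) (eta : 'M[R]_n) (F : 'rV[R]_n -> R)
    (x : 'rV[R]_n.+2) (k i j : 'I_n.+2) : R :=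
  \sum_(l < n.+2) (invmx (etatilde eta)) k l * pd3 l i j (Ftilde eta F) x.

End Defs.

(* Main.v *)
Require Import Defs.
From HB Require Import structures.
From mathcomp Require Import all_boot all_order all_algebra.
From mathcomp Require Import all_classical all_reals all_analysis.
From mathcomp Require Import ring lra zify.
Set Implicit Arguments. Unset Strict Implicit. Unset Printing Implicit Defensive.
Import Order.TTheory GRing.Theory Num.Theory.
Import numFieldNormedType.Exports.
Local Open Scope ring_scope.

Local Open Scope classical_set_scope.

Section U.
Variable n : nat.

Lemma val_iL (a : 'I_n) : val (iL a) = (val a).+1. Proof. by []. Qed.
Lemma val_i0 : val (i0 n) = 0%N. Proof. by []. Qed.
Lemma val_iN : val (iN n) = n.+1. Proof. by []. Qed.

Variant shape : 'I_n.+2 -> Type :=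
 | Sh0 : shape (i0 n) | ShN : shape (iN n) | ShL a : shape (iL a).

Lemma shapeP k : shape k.
Proof.
case: k => -[|m] Hm.
  have -> : Ordinal Hm = i0 n by apply: val_inj.
  exact: Sh0.
case: (ltnP m n) => Hmn.
  have -> : Ordinal Hm = iL (Ordinal Hmn) by apply: val_inj.
  exact: ShL.
have -> : Ordinal Hm = iN n by apply: val_inj => /=; apply/eqP; rewrite eqSS eqn_leq Hmn andbT -ltnS.
exact: ShN.
Qed.

Lemma iL_inj : injective (@iL n).
Proof. by move=> a b /(congr1 val) /= [] /val_inj. Qed.

Lemma eq_iL (a b : 'I_n) : (iL a == iL b) = (a == b).
Proof. by apply/eqP/eqP => [/iL_inj|->]. Qed.
Lemma iL_i0 (a : 'I_n) : (iL a == i0 n) = false. Proof. by []. Qed.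
Lemma i0_iL (a : 'I_n) : (i0 n == iL a) = false. Proof. by []. Qed.
Lemma iL_iN (a : 'I_n) : (iL a == iN n) = false.
Proof. apply/negbTE; rewrite -val_eqE /= eqSS; by rewrite neq_ltn ltn_ord. Qed.
Lemma iN_iL (a : 'I_n) : (iN n == iL a) = false. Proof. by rewrite eq_sym iL_iN. Qed.
Lemma i0_iN : (i0 n == iN n) = false. Proof. by []. Qed.
Lemma iN_i0 : (iN n == i0 n) = false. Proof. by []. Qed.

Lemma cls_iL (a : 'I_n) : cls (iL a) = Some a.
Proof.
rewrite /cls; case: pickP => [b /eqP/iL_inj -> //|/(_ a)]; by rewrite eqxx.
Qed.
Lemma cls_i0 : cls (i0 n) = None.
Proof. rewrite /cls; case: pickP => // b; by rewrite iL_i0. Qed.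
Lemma cls_iN : cls (iN n) = None.
Proof. rewrite /cls; case: pickP => // b; by rewrite iL_iN. Qed.

Lemma sum_split {V : nmodType} (f : 'I_n.+2 -> V) :
  \sum_(k < n.+2) f k = f (i0 n) + \sum_(a < n) f (iL a) + f (iN n).
Proof.
rewrite big_ord_recl big_ord_recr /= addrA.
by congr (_ + _ + f _); apply: val_inj.
Qed.

End U.

Ltac simpc := rewrite ?cls_i0 ?cls_iN ?cls_iL ?eqxx ?i0_iN ?iN_i0 ?iL_i0 ?i0_iL
   ?iL_iN ?iN_iL ?eq_iL /=.

Lemma mul3C (R : comPzRingType) (p q r : R) : p * r * q = q * r * p.
Proof. by ring. Qed.


Section D.
Variable R : realType.
Variable V : normedModType R.

Lemma is_derive_poly3 (f : V -> R) x v (c d e : R) :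
  (forall h : R, f (h *: v + x) = f x + h * c + h ^+ 2 * d + h ^+ 3 * e) ->
  is_derive x v f c.
Proof.
move=> Hf.
have Hq : (fun h : R => h^-1 *: ((f \o shift x) (h *: v) - f x)) @ 0^' --> c.
  have Hp : (fun h : R => c + h * d + h * h * e) @ 0^' --> c.
    have Hc : {for 0, continuous (fun h : R => c + h * d + h * h * e)}.
      apply: continuousD; [apply: continuousD|].
      - exact: cvg_cst.
      - by apply: continuousM; [exact: cvg_id|exact: cvg_cst].
      - apply: continuousM; last exact: cvg_cst.
        by apply: continuousM; exact: cvg_id.
    have := (continuous_withinNx _ _).1 Hc.
    by rewrite /= !mul0r !addr0.
  apply: cvg_trans Hp; apply: near_eq_cvg; near=> h.
  have hn0 : h != 0 by near: h; exact: nbhs_dnbhs_neq.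
  rewrite /= Hf /shift.
  apply/(mulfI hn0); rewrite [in RHS]/GRing.scale /= mulrA mulfV // mul1r. 
  ring.
split; [by apply/cvg_ex; exists c | exact: cvg_lim].
Unshelve. all: by end_near. Qed.

End D.

Section P.
Variable R : realType.
Variable n : nat.
Variable eta : 'M[R]_n.
Hypothesis eta_sym : eta^T = eta.

Definition B (u w : 'rV[R]_n.+2) : R :=
  \sum_(a < n) \sum_(b < n) eta a b * u 0 (iL a) * w 0 (iL b).

Lemma B_addl h u t w : B (h *: u + t) w = h * B u w + B t w.
Proof.
rewrite /B big_distrr -big_split /=; apply: eq_bigr => a _.
rewrite big_distrr -big_split /=; apply: eq_bigr => b _.
rewrite !mxE; ring.
Qed.

Lemma B_addr h u t w : B w (h *: u + t) = h * B w u + B w t.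
Proof.
rewrite /B big_distrr -big_split /=; apply: eq_bigr => a _.
rewrite big_distrr -big_split /=; apply: eq_bigr => b _.
rewrite !mxE; ring.
Qed.

Lemma Bsym u w : B u w = B w u.
Proof.
rewrite /B exchange_big /=; apply: eq_bigr => a _; apply: eq_bigr => b _.
have -> : eta b a = eta a b by rewrite -[in LHS]eta_sym mxE.
ring.
Qed.

Definition Pol (t : 'rV[R]_n.+2) : R :=
  2^-1 * (\sum_(a < n) \sum_(b < n) eta a b * t 0 (iL a) * t 0 (iL b) * t 0 (i0 n)
          + t 0 (i0 n) ^+ 2 * t 0 (iN n)).

Lemma PolE t : Pol t = 2^-1 * (B t t * t 0 (i0 n) + t 0 (i0 n) ^+ 2 * t 0 (iN n)).
Proof.
rewrite /Pol /B big_distrl /=; congr (_ * (_ + _)); apply: eq_bigr => a _.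
by rewrite big_distrl.
Qed.

Definition P1 (w t : 'rV[R]_n.+2) : R :=
  B w t * t 0 (i0 n) + 2^-1 * (B t t * w 0 (i0 n)) + t 0 (i0 n) * w 0 (i0 n) * t 0 (iN n)
  + 2^-1 * (t 0 (i0 n) ^+ 2 * w 0 (iN n)).

Definition P2 (v w t : 'rV[R]_n.+2) : R :=
  B w v * t 0 (i0 n) + B w t * v 0 (i0 n) + B v t * w 0 (i0 n)
  + v 0 (i0 n) * w 0 (i0 n) * t 0 (iN n) + t 0 (i0 n) * w 0 (i0 n) * v 0 (iN n)
  + t 0 (i0 n) * v 0 (i0 n) * w 0 (iN n).

Definition P3 (u v w : 'rV[R]_n.+2) : R :=
  B w v * u 0 (i0 n) + B w u * v 0 (i0 n) + B v u * w 0 (i0 n)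
  + v 0 (i0 n) * w 0 (i0 n) * u 0 (iN n) + u 0 (i0 n) * w 0 (i0 n) * v 0 (iN n)
  + u 0 (i0 n) * v 0 (i0 n) * w 0 (iN n).

Lemma is_derive_Pol t v : is_derive t v Pol (P1 v t).
Proof.
apply: (is_derive_poly3 (d := 2^-1 * (B v v * t 0 (i0 n) + 2 * B v t * v 0 (i0 n)
   + v 0 (i0 n) ^+ 2 * t 0 (iN n) + 2 * v 0 (i0 n) * t 0 (i0 n) * v 0 (iN n)))
  (e := 2^-1 * (B v v * v 0 (i0 n) + v 0 (i0 n) ^+ 2 * v 0 (iN n)))).
move=> h; rewrite !PolE /P1 B_addl !B_addr (Bsym t v) !mxE; by field.
Qed.

Lemma is_derive_P1 w t v : is_derive t v (P1 w) (P2 v w t).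
Proof.
apply: (is_derive_poly3 (d := B w v * v 0 (i0 n) + 2^-1 * (B v v * w 0 (i0 n))
   + v 0 (i0 n) * w 0 (i0 n) * v 0 (iN n) + 2^-1 * (v 0 (i0 n) ^+ 2 * w 0 (iN n)))
  (e := 0)).
move=> h; rewrite /P1 /P2 B_addl !B_addr (Bsym t v) !mxE; by field.
Qed.

Lemma is_derive_P2 v w t u : is_derive t u (P2 v w) (P3 u v w).
Proof.
apply: (is_derive_poly3 (d := 0) (e := 0)).
move=> h; rewrite /P2 /P3 !B_addr !mxE; ring.
Qed.

End P.

Section C.
Variable R : realType.
Variable n : nat.

Lemma proj_lin (h : R) (v t : 'rV[R]_n.+2) :
  proj_mid (h *: v + t) = h *: proj_mid v + proj_mid t.
Proof. by apply/matrixP => i j; rewrite !mxE. Qed.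

Lemma derive_comp_proj (G : 'rV[R]_n -> R) t v :
  derive (fun x => G (proj_mid x)) t v = derive G (proj_mid t) (proj_mid v).
Proof.
rewrite /derive.
have -> : (fun h : R => h^-1 *: (((fun x => G (proj_mid x)) \o shift t) (h *: v) - G (proj_mid t)))
  = (fun h : R => h^-1 *: ((G \o shift (proj_mid t)) (h *: proj_mid v) - G (proj_mid t))).
  by apply: funext => h /=; rewrite /shift proj_lin.
by [].
Qed.

Lemma derivable_comp_proj (G : 'rV[R]_n -> R) t v :
  derivable G (proj_mid t) (proj_mid v) -> derivable (fun x => G (proj_mid x)) t v.
Proof.
rewrite /derivable => H.
have -> : (fun h : R => h^-1 *: (((fun x => G (proj_mid x)) \o shift t) (h *: v) - G (proj_mid t)))
  = (fun h : R => h^-1 *: ((G \o shift (proj_mid t)) (h *: proj_mid v) - G (proj_mid t))).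
  by apply: funext => h /=; rewrite /shift proj_lin.
exact: H.
Qed.

Lemma proj_delta (k : 'I_n.+2) :
  proj_mid (delta_mx 0 k : 'rV[R]_n.+2) =
  match cls k with Some a => delta_mx 0 a | None => 0 end.
Proof.
case: (shapeP k) => [||a]; rewrite ?cls_i0 ?cls_iN ?cls_iL;
  apply/matrixP => i j; rewrite !mxE //= ?iL_i0 ?iL_iN ?eq_iL ?andbF ?ord1 //.
Qed.

Definition pdt (k : 'I_n.+2) (G : 'rV[R]_n -> R) : 'rV[R]_n -> R :=
  match cls k with Some a => pd a G | None => fun _ => 0 end.

Lemma pd_comp k (G : 'rV[R]_n -> R) :
  pd k (fun x => G (proj_mid x)) = fun x => pdt k G (proj_mid x).
Proof.
apply: funext => x; rewrite /pd derive_comp_proj proj_delta /pdt.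
by case: (cls k) => [a|]; rewrite ?derive0.
Qed.

Lemma pd_cst0 (a : 'I_n) : pd a (fun _ : 'rV[R]_n => (0 : R)) = fun _ => 0.
Proof. apply: funext => x; exact: (derive_cst (0 : R)). Qed.

Lemma pdt_diff k (G : 'rV[R]_n -> R) :
  (forall a y, differentiable (pd a G) y) -> forall y, differentiable (pdt k G) y.
Proof.
move=> H y; rewrite /pdt; case: (cls k) => [a|]; first exact: H.
exact: differentiable_cst.
Qed.

Lemma pd_sum (f : 'rV[R]_n.+2 -> R) (G : 'rV[R]_n -> R) k (df : 'rV[R]_n.+2 -> R) :
  (forall x, is_derive x (delta_mx 0 k) f (df x)) ->
  (forall y, differentiable G y) ->
  pd k (fun x => f x + G (proj_mid x)) = fun x => df x + pdt k G (proj_mid x).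
Proof.
move=> Hf HG; apply: funext => x; rewrite /pd.
have -> : (fun x => f x + G (proj_mid x)) = f + (fun x => G (proj_mid x)) by [].
rewrite deriveD; last 2 first.
- exact: ex_derive.
- by apply: derivable_comp_proj; apply: diff_derivable.
by rewrite derive_val derive_comp_proj proj_delta /pdt; case: (cls k) => [a|]; rewrite ?derive0.
Qed.

End C.

Section Sch.
Variable R : realType.
Variable V : normedModType R.

Lemma diff_epsdelta (f : V -> R) x : differentiable f x ->
  forall eps : R, 0 < eps -> exists2 del : R, 0 < del &
    forall z : V, `|z| < del -> `|f (z + x) - f x - 'd f x z| <= eps * `|z|.
Proof.
move=> Hd eps eps0.
have /eqaddoP H := diff_locally Hd.
have /nbhs_norm0P [del del0 Hdel] := H eps eps0.
exists del => // z zlt; have := Hdel z zlt.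
by rewrite /= opprD addrA.
Qed.

Lemma line_derive (G : V -> R) (y u : V) (s : R) :
  derivable G (s *: u + y) u ->
  is_derive s 1 (fun s : R => G (s *: u + y)) ('D_u G (s *: u + y)).
Proof.
have E : (fun h : R => h^-1 *: (((fun s0 : R => G (s0 *: u + y)) \o shift s) (h *: 1) - G (s *: u + y)))
  = (fun h : R => h^-1 *: ((G \o shift (s *: u + y)) (h *: u) - G (s *: u + y))).
  apply: funext => h /=; rewrite /shift /=.
  by rewrite [h *: 1]/GRing.scale /= mulr1 scalerDl addrA.
move=> Hd; split.
  by rewrite /derivable E.
by rewrite /derive E.
Qed.


Lemma schwarz_bound (G : V -> R) x (u w : V) (eps : R) :
  (forall y, differentiable G y) -> differentiable ('D_u G) x -> 0 < eps ->
  exists2 del : R, 0 < del & forall h : R, 0 < h -> h < del ->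
   `|(G (h *: u + (x + h *: w)) - G (h *: u + x)) - (G (x + h *: w) - G x)
       - h ^+ 2 * 'd ('D_u G) x w|
     <= eps * (2 * `|u| + `|w|) * h ^+ 2.
Proof.
move=> HG HD eps0.
have [del del0 Hdel] := diff_epsdelta HD eps0.
have nu := normr_ge0 u; have nw := normr_ge0 w.
set K := `|u| + `|w| + 1.
have K0 : 0 < K by rewrite /K; lra.
exists (del / K) => [|h h0 hdel]; first by apply: divr_gt0.
have hK : h * K < del by rewrite -ltr_pdivlMr.
pose phi := fun s : R => G (s *: u + (x + h *: w)) - G (s *: u + x).
pose dphi := fun s : R => 'D_u G (s *: u + (x + h *: w)) - 'D_u G (s *: u + x).
have Hphi : forall s : R, is_derive s 1 phi (dphi s).
  move=> s.
  have -> : phi = (fun s => G (s *: u + (x + h *: w))) - (fun s => G (s *: u + x)) by [].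
  apply: is_deriveB; apply: line_derive; exact: diff_derivable.
have Hcont : {within `[0, h], continuous phi}.
  apply: continuous_subspaceT => s; apply: differentiable_continuous.
  apply/derivable1_diffP; by case: (Hphi s).
have [c c_in Hc] := MVT h0 (fun s _ => Hphi s) Hcont.
move: c_in; rewrite in_itv /= => /andP [c0 ch].
have Ephi : phi h - phi 0 = (G (h *: u + (x + h *: w)) - G (h *: u + x)) - (G (x + h *: w) - G x).
  by rewrite /phi !scale0r !add0r.
rewrite -Ephi Hc subr0.
set L := 'd ('D_u G) x.
set z1 := c *: u + h *: w; set z2 := c *: u.
have e1 : c *: u + (x + h *: w) = z1 + x by rewrite /z1 -addrA (addrC x).
have e2 : c *: u + x = z2 + x by [].
have nz1 : `|z1| <= c * `|u| + h * `|w|.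
  rewrite /z1; apply: (le_trans (ler_normD _ _)); rewrite !normrZ !gtr0_norm //.
have nz2 : `|z2| <= c * `|u| by rewrite /z2 normrZ gtr0_norm.
have cu : c * `|u| <= h * `|u| by apply: ler_wpM2r => //; apply: ltW.
have z1d : `|z1| < del.
  apply: le_lt_trans hK; apply: (le_trans nz1); rewrite /K; nra.
have z2d : `|z2| < del.
  apply: le_lt_trans hK; apply: (le_trans nz2); rewrite /K; nra.
have H1 := Hdel _ z1d; have H2 := Hdel _ z2d.
have Lz : L z1 = L z2 + h * L w.
  by rewrite /z1 /z2 linearD !linearZ.
have -> : dphi c * h - h ^+ 2 * L w =
  h * (('D_u G (z1 + x) - 'D_u G x - L z1) - ('D_u G (z2 + x) - 'D_u G x - L z2)).
  rewrite /dphi e1 e2 Lz; ring.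
rewrite normrM gtr0_norm //.
set r1 := ('D_u G (z1 + x) - 'D_u G x - L z1) in H1 *.
set r2 := ('D_u G (z2 + x) - 'D_u G x - L z2) in H2 *.
have Hr : `|r1 - r2| <= eps * h * (2 * `|u| + `|w|).
  apply: le_trans (ler_normB _ _) _.
  have : eps * `|z1| <= eps * (h * `|u| + h * `|w|).
    apply: ler_wpM2l; [exact: ltW| lra].
  have : eps * `|z2| <= eps * (h * `|u|).
    apply: ler_wpM2l; [exact: ltW| lra].
  move=> A1 A2; nra.
have : h * `|r1 - r2| <= h * (eps * h * (2 * `|u| + `|w|)).
  by apply: ler_wpM2l => //; apply: ltW.
move=> A; apply: (le_trans A); rewrite expr2; lra.
Qed.


End Sch.

Section Sch2.
Variable R : realType.

Lemma close_eq (A B k1 k2 : R) (P : R -> R) : 0 <= k1 -> 0 <= k2 ->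
  (forall eps, 0 < eps -> exists h, [/\ 0 < h, `|P h - h ^+ 2 * A| <= eps * k1 * h ^+ 2
       & `|P h - h ^+ 2 * B| <= eps * k2 * h ^+ 2]) -> A = B.
Proof.
move=> k10 k20 H.
apply/eqP; rewrite -subr_eq0 -normr_le0; apply/ler_addgt0Pr => e e0.
pose C := k1 + k2 + 1.
have C0 : 0 < C by rewrite /C; lra.
have eps0 : 0 < e / C by apply: divr_gt0.
have [h [h0 K1 K2]] := H _ eps0.
have Kt : `|h ^+ 2 * A - h ^+ 2 * B| <= e / C * k1 * h ^+ 2 + e / C * k2 * h ^+ 2.
  have -> : h ^+ 2 * A - h ^+ 2 * B = - (P h - h ^+ 2 * A) + (P h - h ^+ 2 * B) by ring.
  apply: (le_trans (ler_normD _ _)); rewrite normrN; exact: lerD.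
have h20 : 0 < h ^+ 2 by rewrite exprn_gt0.
rewrite -mulrBr normrM gtr0_norm // in Kt.
have K : `|A - B| <= e / C * (k1 + k2).
  rewrite -(ler_pM2l h20); apply: (le_trans Kt); rewrite -!mulrA -mulrDr; lra.
rewrite add0r; apply: (le_trans K).
have Hk : k1 + k2 <= C by rewrite /C; lra.
have : e / C * (k1 + k2) <= e / C * C by apply: ler_wpM2l => //; apply: ltW.
by rewrite divfK ?gt_eqF.
Qed.

Variable V : normedModType R.

Lemma schwarz_gen (G : V -> R) x (u w : V) :
  (forall y, differentiable G y) -> differentiable ('D_u G) x ->
  differentiable ('D_w G) x ->
  'D_w ('D_u G) x = 'D_u ('D_w G) x.
Proof.
move=> HG Du Dw; rewrite (deriveE _ Du) (deriveE _ Dw).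
apply: (@close_eq _ _ (2 * `|u| + `|w|) (2 * `|w| + `|u|)
  (fun h => (G (h *: u + (x + h *: w)) - G (h *: u + x)) - (G (x + h *: w) - G x))).
- by apply: addr_ge0 => //; apply: mulr_ge0.
- by apply: addr_ge0 => //; apply: mulr_ge0.
move=> eps eps0.
have [d1 d10 H1] := schwarz_bound w HG Du eps0.
have [d2 d20 H2] := schwarz_bound u HG Dw eps0.
have hm : 0 < Num.min d1 d2 by rewrite lt_min d10 d20.
have hmin1 : Num.min d1 d2 <= d1 by rewrite ge_min lexx.
have hmin2 : Num.min d1 d2 <= d2 by rewrite ge_min lexx orbT.
exists (Num.min d1 d2 / 2).
have h0 : 0 < Num.min d1 d2 / 2 by lra.
have hd1 : Num.min d1 d2 / 2 < d1 by lra.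
have hd2 : Num.min d1 d2 / 2 < d2 by lra.
split => //; first exact: H1.
move: (H2 _ h0 hd2).
have -> : (Num.min d1 d2 / 2) *: w + (x + (Num.min d1 d2 / 2) *: u)
   = (Num.min d1 d2 / 2) *: u + (x + (Num.min d1 d2 / 2) *: w).
  by rewrite addrCA [in RHS]addrCA (addrC (_ *: w)).
rewrite (addrC _ x) (addrC ((Num.min d1 d2 / 2) *: u) x).
set a := G _; set b := G (x + _ *: u); set c := G (x + _ *: w).
move=> K; apply: le_trans K; rewrite le_eqVlt; apply/orP; left; apply/eqP.
congr (`| _ |); ring.
Qed.

End Sch2.

Section T.
Variable R : realType.
Variable n : nat.
Variable eta : 'M[R]_n.
Variable F : 'rV[R]_n -> R.
Hypothesis eta_sym : eta^T = eta.
Hypothesis F_diff : forall x, differentiable F x.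
Hypothesis F_diff1 : forall (i : 'I_n) x, differentiable (pd i F) x.
Hypothesis F_diff2 : forall (i j : 'I_n) x, differentiable (pd i (pd j F)) x.

Local Notation e k := (delta_mx 0 k : 'rV[R]_n.+2).

Lemma pd1_Ft l : pd l (Ftilde eta F) = fun x => P1 eta (e l) x + pdt l F (proj_mid x).
Proof.
have -> : Ftilde eta F = fun x => Pol eta x + F (proj_mid x) by [].
by apply: pd_sum => // x; exact: is_derive_Pol.
Qed.

Lemma pdt_F_diff l y : differentiable (pdt l F) y.
Proof. exact: pdt_diff. Qed.

Lemma pdt2_F_diff m l y : differentiable (pdt m (pdt l F)) y.
Proof.
apply: pdt_diff => a z; rewrite /pdt; case: (cls l) => [b|]; first exact: F_diff2.
rewrite pd_cst0; exact: differentiable_cst.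
Qed.

Lemma pd2_Ft m l : pd m (pd l (Ftilde eta F)) =
  fun x => P2 eta (e m) (e l) x + pdt m (pdt l F) (proj_mid x).
Proof.
rewrite pd1_Ft; apply: pd_sum; last exact: pdt_F_diff.
by move=> x; exact: is_derive_P1.
Qed.

Definition F3 p m l := pdt p (pdt m (pdt l F)).

Lemma pd3_Ft p m l x : pd3 p m l (Ftilde eta F) x =
  P3 eta (e p) (e m) (e l) + F3 p m l (proj_mid x).
Proof.
rewrite /pd3 pd2_Ft.
have Hd : forall y, is_derive y (e p) (P2 eta (e m) (e l)) (P3 eta (e p) (e m) (e l)).
  by move=> y; exact: is_derive_P2.
have E := pd_sum Hd (pdt2_F_diff m l).
exact: (congr1 (fun g => g x) E).
Qed.

End T.

Section T2.
Variable R : realType.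
Variable n : nat.
Variable eta : 'M[R]_n.
Variable F : 'rV[R]_n -> R.
Hypothesis eta_sym : eta^T = eta.
Hypothesis F_diff : forall x, differentiable F x.
Hypothesis F_diff1 : forall (i : 'I_n) x, differentiable (pd i F) x.
Hypothesis F_diff2 : forall (i j : 'I_n) x, differentiable (pd i (pd j F)) x.
Local Notation e k := (delta_mx 0 k : 'rV[R]_n.+2).
Local Notation F3 := (F3 F).
Lemma F3E p m l : F3 p m l = match cls p, cls m, cls l with
  | Some a, Some b, Some c => pd3 a b c F | _, _, _ => fun _ => 0 end.
Proof.
rewrite /F3 /pdt; case: (cls l) => [c|]; case: (cls m) => [b|];
  case: (cls p) => [a|]; rewrite ?pd_cst0 //.
Qed.

Lemma schwarz_pd (G : 'rV[R]_n -> R) :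
  (forall y, differentiable G y) -> (forall k y, differentiable (pd k G) y) ->
  forall i j, pd i (pd j G) = pd j (pd i G).
Proof.
move=> HG HG1 i j; apply: funext => x.
exact: (schwarz_gen HG (HG1 j x) (HG1 i x)).
Qed.

Lemma pd3_F_sym12 a b c : pd3 a b c F = pd3 b a c F.
Proof.
rewrite /pd3; apply: schwarz_pd; [exact: F_diff1| move=> k y; exact: F_diff2].
Qed.

Lemma pd3_F_sym23 a b c : pd3 a b c F = pd3 a c b F.
Proof. by rewrite /pd3 (schwarz_pd F_diff F_diff1 b c). Qed.

Lemma F3_sym12 p m l : F3 p m l = F3 m p l.
Proof.
rewrite !F3E; case: (cls p) => [a|]; case: (cls m) => [b|]; case: (cls l) => [c|].
  exact: pd3_F_sym12.
all: by [].
Qed.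

Lemma F3_sym23 p m l : F3 p m l = F3 p l m.
Proof.
rewrite !F3E; case: (cls p) => [a|]; case: (cls m) => [b|]; case: (cls l) => [c|].
  exact: pd3_F_sym23.
all: by [].
Qed.

Lemma P3_sym12 u v w : P3 eta u v w = P3 eta v u w.
Proof. rewrite /P3 (Bsym eta_sym w u) (Bsym eta_sym w v) (Bsym eta_sym v u); ring. Qed.

Lemma P3_sym23 u v w : P3 eta u v w = P3 eta u w v.
Proof. rewrite /P3 (Bsym eta_sym w v) (Bsym eta_sym v u) (Bsym eta_sym w u); ring. Qed.


End T2.

Section A.
Variable R : realType.
Variable n : nat.
Variable eta : 'M[R]_n.
Hypothesis eta_sym : eta^T = eta.
Hypothesis eta_inv : eta \in unitmx.

Local Notation e k := (delta_mx 0 k : 'rV[R]_n.+2).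

Lemma sum_delta_r (f : 'I_n -> R) b : \sum_y f y * (delta_mx 0 b : 'rV[R]_n) 0 y = f b.
Proof.
rewrite (bigD1 b) //= mxE !eqxx mulr1 big1 ?addr0 // => y /negbTE yb.
by rewrite mxE yb andbF mulr0.
Qed.

Lemma sum_delta_r2 (f : 'I_n.+2 -> R) b : \sum_y f y * (b == y)%:R = f b.
Proof.
rewrite (bigD1 b) //= eqxx mulr1 big1 ?addr0 // => y /negbTE yb.
by rewrite eq_sym yb mulr0.
Qed.

Lemma B_e i j : B eta (e i) (e j) =
  match cls i, cls j with Some a, Some b => eta a b | _, _ => 0 end.
Proof.
have Bp : forall u w, B eta u w =
    \sum_a \sum_b eta a b * proj_mid u 0 a * proj_mid w 0 b.
  by move=> u w; rewrite /B; apply: eq_bigr => a _; apply: eq_bigr => b _; rewrite !mxE.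
rewrite Bp !proj_delta; case: (cls i) => [a|]; case: (cls j) => [b|].
- under eq_bigr => x _ do rewrite sum_delta_r.
  exact: sum_delta_r.
- by apply: big1 => x _; apply: big1 => y _; rewrite !mxE ?mulr0 ?mul0r.
- by apply: big1 => x _; apply: big1 => y _; rewrite !mxE ?mulr0 ?mul0r.
- by apply: big1 => x _; apply: big1 => y _; rewrite !mxE ?mulr0 ?mul0r.
Qed.

Lemma e_at k j : (e k) 0 j = (j == k)%:R.
Proof. by rewrite mxE eqxx. Qed.

Definition Gmx : 'M[R]_n.+2 := \matrix_(k, l)
  match cls k, cls l with
  | Some a, Some b => invmx eta a b
  | None, None => if ((k == i0 n) && (l == iN n)) || ((k == iN n) && (l == i0 n)) then 1 else 0
  | _, _ => 0
  end.


Lemma Gmx_mul : Gmx *m etatilde eta = 1%:M.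
Proof.
apply/matrixP => k l; rewrite !mxE sum_split !mxE.
case: (shapeP k) => [||a]; case: (shapeP l) => [||b]; simpc.
all: rewrite ?mul0r ?mul1r ?mulr0 ?mulr1 ?add0r ?addr0.
1-8: by rewrite big1 ?add0r ?addr0 // => x _; rewrite !mxE; simpc; rewrite ?mul0r ?mulr0.
have := mulVmx eta_inv; move/matrixP => /(_ a b); rewrite !mxE => <-.
by apply: eq_bigr => x _; rewrite !mxE; simpc.
Qed.

Lemma Ginv : invmx (etatilde eta) = Gmx.
Proof.
have [U1 _] := mulmx1_unit Gmx_mul.
have [_ U2] := mulmx1_unit Gmx_mul.
by rewrite -[LHS]mul1mx -Gmx_mul -mulmxA mulmxV // mulmx1.
Qed.

Lemma et_mul_G : etatilde eta *m Gmx = 1%:M.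
Proof. exact: mulmx1C Gmx_mul. Qed.

Lemma Gmx_sym l k : Gmx l k = Gmx k l.
Proof.
have Hs : forall a b, invmx eta a b = invmx eta b a.
  by move=> a b; rewrite -[in LHS]eta_sym -trmx_inv mxE.
rewrite !mxE; case: (cls l) => [a|]; case: (cls k) => [b|] //.
case: (k == i0 n); case: (l == iN n); case: (k == iN n); case: (l == i0 n) => //.
Qed.


End A.

Section A2.
Variable R : realType.
Variable n : nat.
Variable eta : 'M[R]_n.
Variable F : 'rV[R]_n -> R.
Hypothesis eta_sym : eta^T = eta.
Hypothesis eta_inv : eta \in unitmx.
Hypothesis F_diff : forall x, differentiable F x.
Hypothesis F_diff1 : forall (i : 'I_n) x, differentiable (pd i F) x.
Hypothesis F_diff2 : forall (i j : 'I_n) x, differentiable (pd i (pd j F)) x.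

Local Notation e k := (delta_mx 0 k : 'rV[R]_n.+2).


Definition T p m l x := P3 eta (e p) (e m) (e l) + F3 F p m l (proj_mid x).

Lemma T_sym12 p m l x : T p m l x = T m p l x.
Proof. by rewrite /T (P3_sym12 eta_sym) (F3_sym12 F_diff1 F_diff2). Qed.

Lemma T_sym23 p m l x : T p m l x = T p l m x.
Proof. by rewrite /T (P3_sym23 eta_sym) (F3_sym23 F_diff F_diff1). Qed.

Lemma T_0 b l x : T (i0 n) b l x = etatilde eta b l.
Proof.
rewrite /T F3E cls_i0 /= addr0 /P3 !B_e !e_at !mxE.
have Es : forall a c, eta c a = eta a c by move=> a c; rewrite -[in LHS]eta_sym mxE.
case: (shapeP b) => [||a]; case: (shapeP l) => [||c]; simpc;
  rewrite ?mul0r ?mulr0 ?mul1r ?mulr1 ?add0r ?addr0 //.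
Qed.


Lemma T_N b l x : b != i0 n -> T (iN n) b l x = 0.
Proof.
move=> bn; rewrite /T F3E cls_iN /= addr0 /P3 !B_e !e_at cls_iN /=.
rewrite (eq_sym (i0 n) b) (negbTE bn).
case: (cls l) => [c|]; case: (cls b) => [a|] /=; by rewrite ?mul0r ?mulr0 ?add0r ?addr0.
Qed.

Lemma T_LL0 a b x : T (iL a) (iL b) (i0 n) x = eta a b.
Proof.
rewrite /T F3E !cls_iL cls_i0 /= addr0 /P3 !B_e !e_at; simpc.
rewrite ?mul0r ?mulr0 ?mul1r ?mulr1 ?add0r ?addr0.
by rewrite -[in LHS]eta_sym mxE.
Qed.

Lemma T_LLN a b x : T (iL a) (iL b) (iN n) x = 0.
Proof.
rewrite /T F3E !cls_iL cls_iN /= addr0 /P3 !B_e !e_at; simpc.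
by rewrite ?mul0r ?mulr0 ?mul1r ?mulr1 ?add0r ?addr0.
Qed.

Lemma T_LLL a b c x : T (iL a) (iL b) (iL c) x = pd3 a b c F (proj_mid x).
Proof.
rewrite /T F3E !cls_iL /P3 !B_e !e_at; simpc.
by rewrite ?mul0r ?mulr0 ?mul1r ?mulr1 ?add0r ?addr0.
Qed.

Local Notation G := (Gmx eta).

Lemma Grow0 (w : 'I_n.+2 -> R) : \sum_k G (i0 n) k * w k = w (iN n).
Proof.
rewrite sum_split !mxE; simpc; rewrite mul0r mul1r add0r big1 ?add0r // => x _.
by rewrite mxE; simpc; rewrite mul0r.
Qed.

Lemma GrowN (w : 'I_n.+2 -> R) : \sum_k G (iN n) k * w k = w (i0 n).
Proof.
rewrite sum_split !mxE; simpc; rewrite mul0r mul1r addr0 big1 ?addr0 // => x _.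
by rewrite mxE; simpc; rewrite mul0r.
Qed.

Lemma GrowL a (w : 'I_n.+2 -> R) :
  \sum_k G (iL a) k * w k = \sum_b invmx eta a b * w (iL b).
Proof.
rewrite sum_split !mxE; simpc; rewrite !mul0r add0r addr0.
by apply: eq_bigr => b _; rewrite mxE; simpc.
Qed.

Definition X a b c d x := \sum_l \sum_k T a b l x * G l k * T c d k x.

Lemma X_expand a b c d x :
  X a b c d x = \sum_l T a b l x * (\sum_k G l k * T c d k x).
Proof.
rewrite /X; apply: eq_bigr => l _; rewrite big_distrr; apply: eq_bigr => k _; exact: (esym (mulrA _ _ _)).
Qed.

Lemma X_0 b c d x : X (i0 n) b c d x = T c d b x.
Proof.
rewrite /X exchange_big /=.
under eq_bigr => k _ do rewrite -big_distrl /=.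
have E : forall k, \sum_l T (i0 n) b l x * G l k = (b == k)%:R.
  move=> k; have := et_mul_G eta_inv; move/matrixP => /(_ b k); rewrite !mxE => <-.
  by apply: eq_bigr => l _; rewrite T_0.
under eq_bigr => k _ do rewrite E mulrC.
exact: sum_delta_r2.
Qed.

Lemma X_N b c d x : b != i0 n -> X (iN n) b c d x = 0.
Proof.
move=> bn; rewrite /X; apply: big1 => l _; apply: big1 => k _.
by rewrite T_N // !mul0r.
Qed.

Lemma X_sym12 a b c d x : X a b c d x = X b a c d x.
Proof. by apply: eq_bigr => l _; apply: eq_bigr => k _; rewrite T_sym12. Qed.

Lemma X_sym34 a b c d x : X a b c d x = X a b d c x.
Proof. by apply: eq_bigr => l _; apply: eq_bigr => k _; rewrite (T_sym12 c). Qed.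

Lemma X_swap a b c d x : X a b c d x = X c d a b x.
Proof.
rewrite /X exchange_big /=; apply: eq_bigr => l _; apply: eq_bigr => k _.
by rewrite (Gmx_sym eta_sym); exact: mul3C.
Qed.

Lemma X_mid a b c d x : X (iL a) (iL b) (iL c) (iL d) x =
  \sum_l \sum_k pd3 a b l F (proj_mid x) * invmx eta l k * pd3 c d k F (proj_mid x).
Proof.
rewrite X_expand sum_split Grow0 GrowN !T_LLN !T_LL0 mulr0 mul0r add0r addr0.
apply: eq_bigr => l _; rewrite GrowL big_distrr; apply: eq_bigr => k _.
rewrite !T_LLL; exact: mulrA.
Qed.

End A2.

Lemma mul4C (R : comPzRingType) (a b c d : R) : (a * b) * (c * d) = c * (b * a * d).
Proof. by ring. Qed.

Lemma mul_eq2 (R : comPzRingType) (a b c : R) : b = c -> a * b = a * c.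
Proof. by move->. Qed.

Opaque T Gmx pd3 pd.

Section M.
Variable R : realType.
Variable n : nat.
Variable eta : 'M[R]_n.
Variable F : 'rV[R]_n -> R.
Hypothesis eta_sym : eta^T = eta.
Hypothesis eta_inv : eta \in unitmx.
Hypothesis F_diff : forall x, differentiable F x.
Hypothesis F_diff1 : forall (i : 'I_n) x, differentiable (pd i F) x.
Hypothesis F_diff2 : forall (i j : 'I_n) x, differentiable (pd i (pd j F)) x.
Hypothesis F_assoc : assoc_eqs eta F.

Local Notation T := (T eta F).
Local Notation X := (X eta F).
Local Notation G := (Gmx eta).


Lemma mid_of (k : 'I_n.+2) : k != i0 n -> k != iN n -> exists a, k = iL a.
Proof. by case: (shapeP k) => [||a]; rewrite ?eqxx // => _ _; exists a. Qed.

Let XS12 := X_sym12 eta_sym F_diff1 F_diff2.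
Let XSW := X_swap F eta_sym.
Let X0 := X_0 F eta_sym eta_inv.
Let XN := X_N eta F.
Let TS12 := T_sym12 eta_sym F_diff1 F_diff2.
Let TS23 := T_sym23 eta_sym F_diff F_diff1.

Lemma WDVV_T a b c d x : X a b c d x = X c b a d x.
Proof.
have [->|a0] := eqVneq a (i0 n).
  by rewrite X0 XSW X0 TS23.
have [->|b0] := eqVneq b (i0 n).
  by rewrite XS12 X0 [RHS]XS12 X0 TS12 TS23 TS12.
have [->|c0] := eqVneq c (i0 n).
  by rewrite XSW X0 X0 TS23.
have [->|d0] := eqVneq d (i0 n).
  by rewrite XSW XS12 X0 [RHS]XSW [RHS]XS12 X0 TS12 TS23 TS12.
have [->|aN] := eqVneq a (iN n).
  by rewrite XN // XSW XN.
have [->|cN] := eqVneq c (iN n).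
  by rewrite XN // XSW XN.
have [->|bN] := eqVneq b (iN n).
  by rewrite XS12 XN // XS12 XN.
have [->|dN] := eqVneq d (iN n).
  by rewrite XSW XS12 XN // XSW XS12 XN.
have [a' ->] := mid_of a0 aN; have [b' ->] := mid_of b0 bN.
have [c' ->] := mid_of c0 cN; have [d' ->] := mid_of d0 dN.
by rewrite !(X_mid F eta_sym); exact: F_assoc.
Qed.


Lemma pd3T p m l x : pd3 p m l (Ftilde eta F) x = T p m l x.
Proof. exact: (pd3_Ft eta_sym F_diff F_diff1 F_diff2). Qed.

Lemma cstrE x k i j : cstr eta F x k i j = \sum_l G k l * T i j l x.
Proof.
rewrite /cstr (Ginv eta_inv); apply: eq_bigr => l _.
by rewrite pd3T TS12 TS23.
Qed.

Lemma core i j k p x :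
  \sum_m (\sum_l G m l * T i j l x) * (\sum_q G p q * T k q m x) =
  \sum_q G p q * X i j k q x.
Proof.
transitivity (\sum_m \sum_q \sum_l G p q * (T i j l x * G l m * T k q m x)).
  apply: eq_bigr => m _; rewrite big_distrlr exchange_big /=.
  apply: eq_bigr => q _; apply: eq_bigr => l _.
  rewrite (Gmx_sym eta_sym m l); exact: mul4C.
rewrite exchange_big /=; apply: eq_bigr => q _.
rewrite exchange_big /= /X big_distrr /=; apply: eq_bigr => l _.
by rewrite big_distrr.
Qed.

Lemma assoc_eqs_Ft : assoc_eqs (etatilde eta) (Ftilde eta F).
Proof.
move=> x a b c d.
transitivity (X a b c d x).
  rewrite (Ginv eta_inv) /X.
  by apply: eq_bigr => l _; apply: eq_bigr => k _; rewrite !pd3T.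
rewrite WDVV_T (Ginv eta_inv) /X.
by apply: eq_bigr => l _; apply: eq_bigr => k _; rewrite !pd3T.
Qed.

Lemma cstr_assoc x i j k p :
  \sum_(m < n.+2) cstr eta F x m i j * cstr eta F x p m k =
  \sum_(m < n.+2) cstr eta F x m j k * cstr eta F x p i m.
Proof.
transitivity (\sum_m (\sum_l G m l * T i j l x) * (\sum_q G p q * T k q m x)).
  apply: eq_bigr => m _; rewrite cstrE cstrE; apply: mul_eq2.
  by apply: eq_bigr => q _; rewrite TS12 TS23.
rewrite core.
transitivity (\sum_q G p q * X j k i q x).
  by apply: eq_bigr => q _; rewrite [in RHS]XS12 WDVV_T.
rewrite -core; apply: eq_bigr => m _; rewrite cstrE cstrE; apply: mul_eq2.
by apply: eq_bigr => q _; rewrite TS23.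
Qed.

Lemma cstr_unit x k j : cstr eta F x k (i0 n) j = (if k == j then 1 else 0).
Proof.
rewrite cstrE.
have -> : (if k == j then 1 else 0) = ((k == j)%:R : R) by case: (k == j).
have := Gmx_mul eta_inv; move/matrixP => /(_ k j); rewrite !mxE => <-.
by apply: eq_bigr => l _; rewrite TS23 (T_0 F eta_sym).
Qed.

Lemma cstr_NN x k : cstr eta F x k (iN n) (iN n) = 0.
Proof.
rewrite cstrE; apply: big1 => l _.
by rewrite (T_N eta F) ?mulr0 // iN_i0.
Qed.

End M.

Lemma quasi_Ft (R : realType) (n : nat) (eta : 'M[R]_n) (F : 'rV[R]_n -> R) :
  (forall (d : 'I_n -> R) (dF c : R),
     quasihom F d dF ->
     (forall a b : 'I_n, eta a b != 0 -> d a + d b = c) ->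
     forall dt : 'I_n.+2 -> R,
       dt (i0 n) = dF - c -> dt (iN n) = 2 * c - dF ->
       (forall a : 'I_n, dt (iL a) = d a) ->
       quasihom (Ftilde eta F) dt dF).
Proof.
move=> d dF c HF Hc dt H0 HN HL lam x lam0.
have PD : forall r s, lam `^ (r + s) = lam `^ r * lam `^ s.
  by move=> r s; apply: powRD; rewrite (lt0r_neq0 lam0) implybT.
set y := \row_i (lam `^ dt i * x 0 i).
have Ey : forall k, y 0 k = lam `^ dt k * x 0 k by move=> k; rewrite mxE.
have Py : proj_mid y = \row_i (lam `^ d i * (proj_mid x) 0 i).
  by apply/matrixP => i j; rewrite !mxE HL.
rewrite /Ftilde Py HF //.
have S1 : \sum_(a < n) \sum_(b < n) eta a b * y 0 (iL a) * y 0 (iL b) * y 0 (i0 n)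
   = lam `^ dF * \sum_(a < n) \sum_(b < n) eta a b * x 0 (iL a) * x 0 (iL b) * x 0 (i0 n).
  rewrite big_distrr; apply: eq_bigr => a _; rewrite big_distrr; apply: eq_bigr => b _ /=.
  rewrite !Ey H0 !HL.
  have [->|nz] := eqVneq (eta a b) 0; first by rewrite !mul0r ?mulr0.
  have hab := Hc a b nz.
  have -> : lam `^ dF = lam `^ (d a + d b + (dF - c)) by congr (_ `^ _); rewrite hab; ring.
  rewrite !PD; ring.
have S2 : y 0 (i0 n) ^+ 2 * y 0 (iN n) = lam `^ dF * (x 0 (i0 n) ^+ 2 * x 0 (iN n)).
  rewrite !Ey H0 HN.
  have -> : lam `^ dF = lam `^ ((dF - c) + (dF - c) + (2 * c - dF)) by congr (_ `^ _); ring.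
  rewrite !PD; ring.
rewrite S1 S2; ring.
Qed.

Local Close Scope classical_set_scope.
Unset Implicit Arguments.

Theorem lemma3 (R : realType) (n : nat) (eta : 'M[R]_n) (F : 'rV[R]_n -> R)
  (eta_sym : eta^T = eta) (eta_inv : eta \in unitmx)
  (F_diff : forall x, differentiable F x)
  (F_diff1 : forall (i : 'I_n) x, differentiable (pd i F) x)
  (F_diff2 : forall (i j : 'I_n) x, differentiable (pd i (pd j F)) x)
  (F_assoc : assoc_eqs eta F) :
  assoc_eqs (etatilde eta) (Ftilde eta F) /\
  (forall (x : 'rV[R]_n.+2) (i j k p : 'I_n.+2),
     \sum_(m < n.+2) cstr eta F x m i j * cstr eta F x p m k =
     \sum_(m < n.+2) cstr eta F x m j k * cstr eta F x p i m) /\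
  (forall (x : 'rV[R]_n.+2) (k j : 'I_n.+2),
     cstr eta F x k (i0 n) j = (if k == j then 1 else 0)) /\
  (forall (x : 'rV[R]_n.+2) (k : 'I_n.+2), cstr eta F x k (iN n) (iN n) = 0) /\
  (forall (d : 'I_n -> R) (dF c : R),
     quasihom F d dF ->
     (forall a b : 'I_n, eta a b != 0 -> d a + d b = c) ->
     forall dt : 'I_n.+2 -> R,
       dt (i0 n) = dF - c -> dt (iN n) = 2 * c - dF ->
       (forall a : 'I_n, dt (iL a) = d a) ->
       quasihom (Ftilde eta F) dt dF).
Proof.
split; first exact: (assoc_eqs_Ft eta_sym eta_inv F_diff F_diff1 F_diff2 F_assoc).
split; first exact: (cstr_assoc eta_sym eta_inv F_diff F_diff1 F_diff2 F_assoc).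
split; first exact: (cstr_unit eta_sym eta_inv F_diff F_diff1 F_diff2).
split; first exact: (cstr_NN eta_sym eta_inv F_diff F_diff1 F_diff2).
exact: quasi_Ft.
Qed.
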